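(* Let $R$ be a commutative ring with identity, $I$ an ideal of $R$, and $M$ an $R$-module. The following are equivalent: (1) $M$ is $I$-prime and $I$-torsion; (2) $M$ is $I$-coprime and $I$-adically complete; (3) $M$ is $I$-reduced and $I$-torsion; (4) $M$ is $I$-coreduced and $I$-adically complete; (5) $IM=0$.
   Context: All rings are commutative with identity and modules are unital. For an ideal $I$ of $R$ and an $R$-module $M$, $(0:_M I)=\{m\in M: Im=0\}$. An $R$-module $M$ is $I$-prime if for all $m\in M$, $Im=0$ implies $m=0$ or $IM=0$; $I$-coprime if $IM=0$ or $IM=M$; $I$-reduced if for all $m\in M$, $I^2m=0$ implies $Im=0$; $I$-coreduced if $IM=I^2M$. The $I$-torsion functor is $\Gamma_I(M)=\{m\in M : I^k m=0 \text{ for some } k\geq 1\}$ and $M$ is $I$-torsion if $\Gamma_I(M)=M$. The $I$-adic completion is $\Lambda_I(M)=\varprojlim_k M/I^kM$, and $M$ is $I$-adically complete if the canonical map $M\to\Lambda_I(M)$ is an isomorphism. *)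

(* Defs.v *)
From mathcomp Require Import all_boot all_algebra.
Set Implicit Arguments. Unset Strict Implicit. Unset Printing Implicit Defensive.
Import GRing.Theory.
Local Open Scope ring_scope.

Definition is_ideal (R : comPzRingType) (I : R -> Prop) : Prop :=
  [/\ I 0, (forall a b, I a -> I b -> I (a + b)) & (forall r a, I a -> I (r * a))].

Fixpoint idealpow (R : comPzRingType) (I : R -> Prop) (k : nat) : R -> Prop :=
  match k with
  | 0 => fun _ => True
  | k'.+1 => fun r => exists n (a b : 'I_n -> R),
        (forall i, I (a i)) /\ (forall i, idealpow I k' (b i)) /\ r = \sum_(i < n) a i * b i
  end.

Definition smul_span (R : comPzRingType) (M : lmodType R) (J : R -> Prop) : M -> Prop :=
  fun m => exists n (a : 'I_n -> R) (x : 'I_n -> M),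
      (forall i, J (a i)) /\ m = \sum_(i < n) a i *: x i.

Definition ann_elt (R : comPzRingType) (M : lmodType R) (J : R -> Prop) (m : M) : Prop :=
  forall r, J r -> r *: m = 0.

Definition IM_zero (R : comPzRingType) (M : lmodType R) (J : R -> Prop) : Prop :=
  forall m : M, smul_span J m -> m = 0.

Definition I_prime (R : comPzRingType) (M : lmodType R) (I : R -> Prop) : Prop :=
  forall m : M, ann_elt I m -> m = 0 \/ IM_zero M I.

Definition I_coprime (R : comPzRingType) (M : lmodType R) (I : R -> Prop) : Prop :=
  IM_zero M I \/ (forall m : M, smul_span I m).

Definition I_reduced (R : comPzRingType) (M : lmodType R) (I : R -> Prop) : Prop :=
  forall m : M, ann_elt (idealpow I 2) m -> ann_elt I m.

Definition I_coreduced (R : comPzRingType) (M : lmodType R) (I : R -> Prop) : Prop :=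
  forall m : M, smul_span I m <-> smul_span (idealpow I 2) m.

(* Gamma_I(M) = M *)
Definition I_torsion (R : comPzRingType) (M : lmodType R) (I : R -> Prop) : Prop :=
  forall m : M, exists2 k, (1 <= k)%N & ann_elt (idealpow I k) m.

(* The canonical map M -> lim_k M/I^k M is bijective (hence an isomorphism).
   An element of the inverse limit is given by representatives x k of classes in
   M / I^k M with x (k+1) = x k mod I^k M. *)
Definition I_adically_complete (R : comPzRingType) (M : lmodType R) (I : R -> Prop) : Prop :=
  (forall m : M, (forall k, smul_span (idealpow I k) m) -> m = 0) /\
  (forall x : nat -> M, (forall k, smul_span (idealpow I k) (x k.+1 - x k)) ->
     exists m : M, forall k, smul_span (idealpow I k) (m - x k)).

(* Main.v *)
Require Import Defs.
From mathcomp Require Import all_boot all_algebra.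
From Stdlib Require Import Classical.
Set Implicit Arguments. Unset Strict Implicit. Unset Printing Implicit Defensive.
Import GRing.Theory.
Local Open Scope ring_scope.

Section S.
Variables (R : comPzRingType) (M : lmodType R).

Lemma span0 (J : R -> Prop) : smul_span J (0 : M).
Proof.
exists 0%N, (fun _ => 0), (fun _ => 0); split; last by rewrite big_ord0.
by move=> [].
Qed.

Lemma spanD (J : R -> Prop) (x y : M) :
  smul_span J x -> smul_span J y -> smul_span J (x + y).
Proof.
move=> [n1 [a1 [x1 [ha1 ->]]]] [n2 [a2 [x2 [ha2 ->]]]].
exists (n1 + n2)%N, (fun i => match split i with inl j => a1 j | inr j => a2 j end),
  (fun i => match split i with inl j => x1 j | inr j => x2 j end); split.
  by move=> i; case: (split i).
rewrite big_split_ord /=; congr (_ + _); apply: eq_bigr => i _.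
  by rewrite (_ : split (lshift n2 i) = inl i) // -[lshift _ _]/(unsplit (inl i)) unsplitK.
by rewrite (_ : split (rshift n1 i) = inr i) // -[rshift _ _]/(unsplit (inr i)) unsplitK.
Qed.

Lemma span_sum (J : R -> Prop) n (F : 'I_n -> M) :
  (forall i, smul_span J (F i)) -> smul_span J (\sum_(i < n) F i).
Proof.
move=> h; apply: (big_ind (smul_span J)) => //; [exact: span0 | exact: spanD].
Qed.

Lemma span1 (J : R -> Prop) r (x : M) : J r -> smul_span J (r *: x).
Proof.
move=> hr; exists 1%N, (fun _ => r), (fun _ => x); split => //; by rewrite big_ord1.
Qed.

Lemma span_mono (J J' : R -> Prop) (x : M) :
  (forall r, J r -> J' r) -> smul_span J x -> smul_span J' x.
Proof.
move=> h [n [a [y [ha ->]]]]; exists n, a, y; split => // i; exact: h.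
Qed.

Lemma span_scale (J J' : R -> Prop) r (x : M) :
  (forall c, J c -> J' (r * c)) -> smul_span J x -> smul_span J' (r *: x).
Proof.
move=> h [n [a [y [ha ->]]]]; rewrite scaler_sumr; apply: span_sum => i.
by rewrite scalerA; apply: span1; apply: h.
Qed.

Lemma ideal_sum (I : R -> Prop) n (F : 'I_n -> R) :
  is_ideal I -> (forall i, I (F i)) -> I (\sum_(i < n) F i).
Proof. by case=> h0 hD _ h; apply: big_ind. Qed.

Lemma ip_sub (I : R -> Prop) k : is_ideal I -> forall r, idealpow I k.+1 r -> I r.
Proof.
move=> hI r /= [n [a [b [ha [_ ->]]]]]; apply: ideal_sum => // i.
case: hI => _ _ hM; rewrite mulrC; exact: hM.
Qed.

Lemma ip1 (I : R -> Prop) r : I r -> idealpow I 1 r.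
Proof.
move=> hr; exists 1%N, (fun _ => r), (fun _ => 1); split => //; by rewrite big_ord1 mulr1.
Qed.

Lemma ip_mulr (I : R -> Prop) k r s : is_ideal I -> idealpow I k s -> idealpow I k (r * s).
Proof.
case: k => [//|k] [_ _ hM] [n [a [b [ha [hb ->]]]]].
exists n, (fun i => r * a i), b; split; first by move=> i; apply: hM.
split; first exact: hb.
by rewrite mulr_sumr; apply: eq_bigr => i _; rewrite mulrA.
Qed.

Lemma ip_mul (I : R -> Prop) p q x y : is_ideal I ->
  idealpow I p x -> idealpow I q y -> idealpow I (p + q) (x * y).
Proof.
move=> hI; elim: p x => [|p IH] x hx hy; first by rewrite add0n; apply: ip_mulr.
rewrite addSn; move: hx => /= [n [a [b [ha [hb ->]]]]].
exists n, a, (fun i => b i * y); split; first exact: ha.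
split; first by move=> i; apply: IH.
by rewrite mulr_suml; apply: eq_bigr => i _; rewrite mulrA.
Qed.

Lemma span_top (I : R -> Prop) (m : M) : smul_span (idealpow I 0) m.
Proof. by exists 1%N, (fun _ => 1), (fun _ => m); split => //; rewrite big_ord1 scale1r. Qed.

End S.

Section T.
Variables (R : comPzRingType) (M : lmodType R) (I : R -> Prop) (hI : is_ideal I).

Lemma red_step n (m : M) : I_reduced M I ->
  ann_elt (idealpow I n.+2) m -> ann_elt (idealpow I n.+1) m.
Proof.
move=> hred hm r /= [k [a [b [ha [hb ->]]]]].
rewrite scaler_suml; apply: big1 => i _.
rewrite -scalerA; apply: (hred (b i *: m)) => //.
move=> s hs; rewrite scalerA; apply: hm.
by have := ip_mul hI hs (hb i); rewrite add2n.
Qed.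

Lemma red_ann k (m : M) : I_reduced M I ->
  ann_elt (idealpow I k.+1) m -> ann_elt I m.
Proof.
move=> hred; elim: k m => [|k IH] m hm.
  by move=> r hr; apply: hm; apply: ip1.
by apply: IH; apply: red_step.
Qed.

Lemma ann_zero : (forall m : M, ann_elt I m) -> IM_zero M I.
Proof.
move=> h m [n [a [x [ha ->]]]]; apply: big1 => i _; exact: h.
Qed.

Lemma red_tors : I_reduced M I -> I_torsion M I -> IM_zero M I.
Proof.
move=> hred ht; apply: ann_zero => m.
case: (ht m) => [[|k]] // _ hk; exact: red_ann hk.
Qed.

Lemma prime_red : I_prime M I -> ~ IM_zero M I -> I_reduced M I.
Proof.
move=> hp hn m hm r hr.
have : ann_elt I (r *: m).
  move=> s hs; rewrite scalerA; apply: hm.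
  exists 1%N, (fun _ => s), (fun _ => r); split => //; split; first by move=> _; apply: ip1.
  by rewrite big_ord1.
by case/hp => // /hn.
Qed.

Lemma span_all_pow : (forall m : M, smul_span I m -> smul_span (idealpow I 2) m) ->
  forall k (m : M), smul_span I m -> smul_span (idealpow I k.+1) m.
Proof.
move=> h; elim=> [|k IH] m hm.
  by apply: span_mono hm => r; apply: ip1.
case: (h m hm) => [n [s [x [hs ->]]]]; apply: span_sum => i.
case: (hs i) => [p [c [d [hc [hd ->]]]]].
rewrite scaler_suml; apply: span_sum => j.
rewrite -scalerA; apply: (span_scale (J := idealpow I k.+1)).
  move=> t ht; exists 1%N, (fun _ => c j), (fun _ => t); split => //; split => //.
  by rewrite big_ord1.
apply: IH; apply: span1; apply: (@ip_sub _ _ 0%N hI); exact: hd.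
Qed.

Lemma sep_zero : I_adically_complete M I ->
  (forall m : M, smul_span I m -> smul_span (idealpow I 2) m) -> IM_zero M I.
Proof.
move=> [hsep _] h m hm; apply: hsep => -[|k]; first exact: span_top.
exact: span_all_pow.
Qed.

Lemma coprime_zero : I_coprime M I -> I_adically_complete M I -> IM_zero M I.
Proof.
case=> // hall hc; apply: sep_zero => // m _.
case: (hall m) => [n [a [x [ha ->]]]]; apply: span_sum => i.
apply: (span_scale (J := I)) (hall _) => c hcI.
exists 1%N, (fun _ => a i), (fun _ => c); split => //; split; first by move=> _; apply: ip1.
by rewrite big_ord1.
Qed.

Lemma zero_complete : IM_zero M I -> I_adically_complete M I.
Proof.
move=> hz; split.
  by move=> m /(_ 1%N) h; apply: hz; apply: span_mono h => r; apply: (ip_sub hI).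
move=> x hx.
have hc : forall k, x k.+1 = x 1%N.
  elim=> // k IH; rewrite -IH; apply/eqP; rewrite -subr_eq0; apply/eqP.
  apply: hz; apply: span_mono (hx k.+1) => r; apply: (ip_sub hI).
exists (x 1%N) => -[|k]; first exact: span_top.
by rewrite hc subrr; apply: span0.
Qed.

End T.

Theorem mainTheorem2 (R : comPzRingType) (M : lmodType R) (I : R -> Prop)
  (hI : is_ideal I) :
  [<-> I_prime M I /\ I_torsion M I;
       I_coprime M I /\ I_adically_complete M I;
       I_reduced M I /\ I_torsion M I;
       I_coreduced M I /\ I_adically_complete M I;
       IM_zero M I].
Proof.
have z1 : IM_zero M I -> forall m : M, ann_elt I m.
  by move=> hz m r hr; apply: hz; apply: span1.
have tors : IM_zero M I -> I_torsion M I.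
  move=> hz m; exists 1%N => // r hr; apply: (z1 hz); exact: (ip_sub hI hr).
have sub2 : forall m : M, smul_span (idealpow I 2) m -> smul_span I m.
  by move=> m; apply: span_mono => r; apply: (ip_sub hI).
have h15 : I_prime M I /\ I_torsion M I -> IM_zero M I.
  case=> hp ht; case: (classic (IM_zero M I)) => // hn.
  exact: red_tors (prime_red hp hn) ht.
have h25 : I_coprime M I /\ I_adically_complete M I -> IM_zero M I.
  by case=> ? ?; apply: coprime_zero.
have h35 : I_reduced M I /\ I_torsion M I -> IM_zero M I.
  by case=> ? ?; apply: red_tors.
have h45 : I_coreduced M I /\ I_adically_complete M I -> IM_zero M I.
  by case=> hc ?; apply: sep_zero => // m /hc.
have h51 : IM_zero M I -> I_prime M I /\ I_torsion M I.
  by move=> hz; split; [move=> m _; right | apply: tors].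
have h52 : IM_zero M I -> I_coprime M I /\ I_adically_complete M I.
  by move=> hz; split; [left | apply: zero_complete].
have h53 : IM_zero M I -> I_reduced M I /\ I_torsion M I.
  by move=> hz; split; [move=> m _; apply: z1 | apply: tors].
have h54 : IM_zero M I -> I_coreduced M I /\ I_adically_complete M I.
  move=> hz; split; last exact: zero_complete.
  move=> m; split; last exact: sub2.
  by move/hz => ->; apply: span0.
by split; [|split; [|split; [|split]]] => H; auto.
Qed.
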